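(* For all $i\ge1$, $$\frac{\lambda_{i+1}}{\lambda_i}\in\left[t'(\phi_i),\,t'(\phi_{i-1})\right].$$
   Context: Let $D=\{c_j\}_{j=0}^d$ be an offspring distribution of a Galton–Watson branching process on an infinite $d$-ary tree, with each non-root node independently holding an answer with probability $1/n$. Let $t(x)=\sum_{j=0}^d c_j x^j(1-\frac1n)^j$, $\phi_0=1$, $\phi_i=t(\phi_{i-1})$ for $i\ge1$ (the probability that no active node in the first $i$ levels holds an answer), and $\lambda_i=\phi_{i-1}-\phi_i$ for $i\ge1$ (the probability that the first answer is at level $i$). *)

(* Defs.v *)
From mathcomp Require Import all_boot all_order all_algebra.
Set Implicit Arguments. Unset Strict Implicit. Unset Printing Implicit Defensive.
Import Order.TTheory GRing.Theory Num.Theory.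
Local Open Scope ring_scope.

(* Offspring distribution D = (c_j)_{j=0..d}, answer probability 1/n.
   t(x) = \sum_{j=0}^d c_j x^j (1 - 1/n)^j, as a polynomial in x;
   t'  is its derivative (formal derivative = real derivative of a polynomial). *)
Definition tpoly (R : realFieldType) (d : nat) (c : nat -> R) (n : nat) : {poly R} :=
  \sum_(j < d.+1) (c j * (1 - (n%:R)^-1) ^+ j) *: 'X^j.

Definition phi (R : realFieldType) (d : nat) (c : nat -> R) (n : nat) (i : nat) : R :=
  iter i (fun x => (tpoly d c n).[x]) 1.

Definition lambda (R : realFieldType) (d : nat) (c : nat -> R) (n : nat) (i : nat) : R :=
  phi d c n i.-1 - phi d c n i.

(* Main.v *)
Require Import Defs.
From mathcomp Require Import all_boot all_order all_algebra.
From mathcomp Require Import zify ring lra.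
Import Order.TTheory GRing.Theory Num.Theory.
Local Open Scope ring_scope.
Set Implicit Arguments. Unset Strict Implicit.

Section H.
Variable R : realFieldType.

Lemma monoB (a b : R) (j : nat) : 0 <= a -> a <= b ->
  (b - a) * (a ^+ j.-1 *+ j) <= b ^+ j - a ^+ j <= (b - a) * (b ^+ j.-1 *+ j).
Proof.
move=> a0 ab; have b0 : 0 <= b by apply: le_trans ab.
have ba : 0 <= b - a by rewrite subr_ge0.
rewrite subrXX; apply/andP; split; apply: ler_wpM2l => //.
- have -> : a ^+ j.-1 *+ j = \sum_(i < j) a ^+ j.-1 by rewrite sumr_const card_ord.
  apply: ler_sum => i _.
  have -> : a ^+ j.-1 = a ^+ (j.-1 - i) * a ^+ i.
    rewrite -exprD subnK //; have := ltn_ord i; lia.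
  apply: ler_wpM2r; first exact: exprn_ge0.
  by apply: lerXn2r.
- have -> : b ^+ j.-1 *+ j = \sum_(i < j) b ^+ j.-1 by rewrite sumr_const card_ord.
  apply: ler_sum => i _.
  have -> : b ^+ j.-1 = b ^+ (j.-1 - i) * b ^+ i.
    rewrite -exprD subnK //; have := ltn_ord i; lia.
  apply: ler_wpM2l; first exact: exprn_ge0.
  by apply: lerXn2r.
Qed.

Variables (d : nat) (a : nat -> R).
Hypothesis a0 : forall j : 'I_d.+1, 0 <= a j.
Definition S x := \sum_(j < d.+1) a j * x ^+ j.
Definition D x := \sum_(j < d.+1) a j * (x ^+ j.-1 *+ j).

Lemma SD x y : 0 <= x -> x <= y -> (y - x) * D x <= S y - S x <= (y - x) * D y.
Proof.
move=> x0 xy; rewrite /S /D -sumrB !mulr_sumr; apply/andP; split;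
  apply: ler_sum => j _; rewrite -mulrBr mulrCA; apply: ler_wpM2l => //;
  by have /andP[] := monoB j x0 xy.
Qed.

Lemma D_ge0 x : 0 <= x -> 0 <= D x.
Proof.
move=> x0; apply: sumr_ge0 => j _; apply: mulr_ge0 => //.
by apply: mulrn_wge0; apply: exprn_ge0.
Qed.

Lemma S_ge0 x : 0 <= x -> 0 <= S x.
Proof.
move=> x0; apply: sumr_ge0 => j _; apply: mulr_ge0 => //; exact: exprn_ge0.
Qed.

Lemma D_mono x y : 0 <= x -> x <= y -> D x <= D y.
Proof.
move=> x0 xy; apply: ler_sum => j _; apply: ler_wpM2l => //.
rewrite lerMn2r; apply/orP; right; apply: lerXn2r => //;
  rewrite nnegrE //; exact: le_trans xy.
Qed.
End H.

Section M.
Variables (R : realFieldType) (d : nat) (c : nat -> R) (n : nat).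
Let q : R := 1 - n%:R^-1.
Let a j := c j * q ^+ j.

Lemma tS x : (tpoly d c n).[x] = S d a x.
Proof. rewrite /tpoly horner_sum; apply: eq_bigr => j _; by rewrite hornerZ hornerXn. Qed.

Lemma tD x : (tpoly d c n)^`().[x] = D d a x.
Proof.
rewrite /tpoly raddf_sum horner_sum; apply: eq_bigr => j _.
by rewrite /= derivZ derivXn hornerZ hornerMn hornerXn.
Qed.

Lemma phiS k : phi d c n k.+1 = S d a (phi d c n k).
Proof. by rewrite /phi iterS tS. Qed.

Hypothesis hc0 : forall j, (j <= d)%N -> 0 <= c j.
Hypothesis hc1 : \sum_(j < d.+1) c j = 1.
Hypothesis hn : (0 < n)%N.

Lemma q_bnd : 0 <= q <= 1 /\ 0 < 1 - q.
Proof.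
have n1 : 1 <= n%:R :> R by rewrite ler1n.
have np : 0 < n%:R :> R by rewrite ltr0n.
rewrite /q; split; last by rewrite opprB addrC subrK invr_gt0.
apply/andP; split; last by rewrite lerBlDr lerDl invr_ge0 ltW.
by rewrite subr_ge0 invr_le1 // unitf_gt0.
Qed.

Lemma a_ge0 : forall j : 'I_d.+1, 0 <= a j.
Proof.
move=> j; have [/andP[q0 _] _] := q_bnd.
apply: mulr_ge0; [apply: hc0; exact: (ltn_ord j) | exact: exprn_ge0].
Qed.

Lemma key1 : (1 - q) * D d a 1 <= 1 - S d a 1.
Proof.
have [/andP[q0 q1] _] := q_bnd.
rewrite -[X in _ <= X - _]hc1 /S /D -sumrB mulr_sumr; apply: ler_sum => j _.
rewrite !expr1n mulr1.
have -> : (1 - q) * (c j * q ^+ j * j%:R) = c j * ((1 - q) * (q ^+ j * j%:R)) by ring.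
have -> : c j - c j * q ^+ j = c j * (1 - q ^+ j) by ring.
apply: ler_wpM2l; first by apply: hc0; exact: (ltn_ord j).
have /andP[h _] := monoB (j : nat) q0 q1; rewrite expr1n in h.
apply: le_trans h; apply: ler_wpM2l; first by rewrite subr_ge0.
rewrite -[X in _ <= X]mulr_natr; apply: ler_wpM2r => //.
case: (j : nat) => [|k] //=; rewrite exprS; exact: ler_piMl (exprn_ge0 _ q0) q1.
Qed.

Lemma phi0 : phi d c n 0 = 1. Proof. by []. Qed.

Lemma S1_le1 : S d a 1 <= 1.
Proof.
have [_ q1] := q_bnd; have := key1; rewrite -subr_ge0 => _.
rewrite -subr_ge0; apply: le_trans key1; apply: mulr_ge0; first exact: ltW.
apply: D_ge0 => //; exact: a_ge0.
Qed.

Lemma phi_bnd k : 0 <= phi d c n k.+1 <= phi d c n k /\ phi d c n k <= 1.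
Proof.
elim: k => [|k [/andP[h0 h1] h2]].
  rewrite phiS phi0 S1_le1 andbT; split => //; apply: S_ge0 => //; exact: a_ge0.
split; last exact: le_trans h2.
apply/andP; split.
  rewrite phiS; apply: S_ge0 => //; exact: a_ge0.
have /andP[h _] := SD a_ge0 h0 h1; rewrite -!phiS in h.
rewrite -subr_ge0; apply: le_trans h; apply: mulr_ge0; first by rewrite subr_ge0.
apply: D_ge0 => //; exact: a_ge0.
Qed.

Lemma phi_anti k m : (k <= m)%N -> phi d c n m <= phi d c n k.
Proof.
elim: m => [|m IH]; first by rewrite leqn0 => /eqP ->.
rewrite leq_eqVlt => /orP[/eqP -> //|]; rewrite ltnS => km.
have [/andP[_ h] _] := phi_bnd m; exact: le_trans h (IH km).
Qed.
Lemma strict i : 0 < D d a (phi d c n i) ->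
  forall k, (1 <= k <= i)%N -> phi d c n k < phi d c n k.-1.
Proof.
move=> Dp; have [_ qp] := q_bnd.
have [/andP[pi0 _] _] := phi_bnd i.
have pi1 : phi d c n i <= 1 by rewrite -phi0; apply: phi_anti.
have pi00 : 0 <= phi d c n i.
  case: i {Dp pi1} pi0 => [_|i _]; first by rewrite phi0.
  by have [/andP[] ] := phi_bnd i.
elim => [|k IH]; first by move=> /andP[].
move=> /andP[_ ki].
case: k IH ki => [|k] IH ki.
  rewrite phiS phi0 /= -subr_gt0; apply: lt_le_trans (key1); apply: mulr_gt0 => //.
  apply: lt_le_trans Dp _; apply: D_mono pi00 pi1; exact: a_ge0.
have h := IH (ltnW ki); rewrite /= in h.
have [/andP[k0 k1] _] := phi_bnd k.
have /andP[l _] := SD a_ge0 k0 k1; rewrite -!phiS in l.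
rewrite /= -subr_gt0; apply: lt_le_trans l; apply: mulr_gt0; first by rewrite subr_gt0.
apply: lt_le_trans Dp _; apply: D_mono pi00 _; first exact: a_ge0.
exact: phi_anti (ltnW ki).
Qed.

Lemma mainM i : (1 <= i)%N ->
  D d a (phi d c n i) <= lambda d c n i.+1 / lambda d c n i <= D d a (phi d c n i.-1).
Proof.
case: i => // i _; rewrite /lambda !succnK.
have [/andP[h0 h1] _] := phi_bnd i.
have /andP[l u] := SD a_ge0 h0 h1; rewrite -!phiS in l u.
case: (ltrgtP (phi d c n i.+1) (phi d c n i)) => [lt|gt|ee].
- have p : 0 < phi d c n i - phi d c n i.+1 by rewrite subr_gt0.
  by rewrite ler_pdivlMr // ler_pdivrMr // mulrC l mulrC u.
- by rewrite ltNge h1 in gt.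
- have Dn : D d a (phi d c n i.+1) <= 0.
    rewrite leNgt; apply/negP => Dp.
    have := strict Dp (k := i.+1); rewrite leqnn succnK => /(_ isT).
    by rewrite ee ltxx.
  rewrite ee subrr invr0 mulr0; rewrite ee in Dn; rewrite Dn /=.
  apply: D_ge0; first exact: a_ge0.
  by rewrite -ee.
Qed.
End M.

Theorem proposition3p2 (R : realFieldType) (d : nat) (c : nat -> R) (n : nat)
  (hc0 : forall j, (j <= d)%N -> 0 <= c j)
  (hc1 : \sum_(j < d.+1) c j = 1)
  (hn : (0 < n)%N) :
  forall i : nat, (1 <= i)%N ->
    (tpoly d c n)^`().[phi d c n i] <= lambda d c n i.+1 / lambda d c n i
    <= (tpoly d c n)^`().[phi d c n i.-1].
Proof.
move=> i hi; rewrite !tD; exact: mainM.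
Qed.
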